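(* Let $Y$ be a random variable with values in $S_b$ such that $uYu^*$ has the same distribution as $Y$ for all $u\in\mathbb{O}(d)$, and let $x_0\in S_a$. Then almost surely $x_0+Y\in S_{a+b}$ if $a+b\le d$, and almost surely $x_0+Y\in S_d=\mathcal{P}_d$ if $a+b\ge d$. Furthermore, if $x_0\in S_c$ and $x_0+Y\in S_{a+b}$ almost surely for some integer $a$ with $a+b<d$, then $c=a$.
   Context: $\mathcal{P}_d$ is the cone of real symmetric positive definite $d\times d$ matrices and $\overline{\mathcal{P}_d}$ its closure; for $b=0,\ldots,d$, $S_b=\{x\in\overline{\mathcal{P}_d}:\operatorname{rank}x=b\}$. $\mathbb{O}(d)$ is the orthogonal group and $u^*$ the transpose. *)

(* Defs.v *)
From HB Require Import structures.
From mathcomp Require Import all_boot all_order all_algebra.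
From mathcomp Require Import all_classical all_reals all_analysis.
Set Implicit Arguments. Unset Strict Implicit. Unset Printing Implicit Defensive.
Import Order.TTheory GRing.Theory Num.Theory.
Local Open Scope classical_set_scope.
Local Open Scope ring_scope.

(* The carrier 'M[R]_d, pointed at 0 (needed to build the generated
   sigma-algebra). *)
Definition mxR (R : realType) (d : nat) := 'M[R]_d.
HB.instance Definition _ (R : realType) (d : nat) := Choice.on (mxR R d).
HB.instance Definition _ (R : realType) (d : nat) :=
  isPointed.Build (mxR R d) (0 : 'M[R]_d).

(* Generators of the Borel sigma-algebra on d x d real matrices, viewed as
   R^(d*d): preimages of Borel sets of R under the coordinate maps. *)
Definition mx_entry_gen (R : realType) (d : nat) : set (set (mxR R d)) :=
  [set A | exists (i j : 'I_d) (B : set R),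
      measurable B /\ A = (fun M : mxR R d => (M : 'M[R]_d) i j) @^-1` B].

Notation MxMeas R d := (g_sigma_algebraType (@mx_entry_gen R d)).

(* Symmetric positive semidefinite matrices: the closure of the cone P_d. *)
Definition psd (R : realType) (d : nat) (x : 'M[R]_d) : Prop :=
  x^T = x /\ forall v : 'cV[R]_d, 0 <= (v^T *m x *m v) ord0 ord0.

Definition S_rank (R : realType) (d b : nat) : set 'M[R]_d :=
  [set x | psd x /\ \rank x = b].

Definition orthogonal_mx (R : realType) (d : nat) (u : 'M[R]_d) : Prop :=
  u *m u^T = 1%:M.

Arguments S_rank {R} d b.
Arguments orthogonal_mx {R d}.

(* Main.v *)
Require Import Defs.
From HB Require Import structures.
From mathcomp Require Import all_boot all_order all_algebra.
From mathcomp Require Import all_classical all_reals all_analysis.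
From mathcomp Require Import ring lra.
Import Order.TTheory GRing.Theory Num.Theory.
Local Open Scope classical_set_scope.
Local Open Scope ring_scope.

Section Minor.
Context {F : fieldType}.

Lemma minor_rank m n k (A : 'M[F]_(m, n)) (f : 'I_k -> 'I_m) (g : 'I_k -> 'I_n) :
  \det (mxsub f g A) != 0 -> (k <= \rank A)%N.
Proof.
move=> hd.
have hu : mxsub f g A \in unitmx by rewrite unitmxE unitfE.
have e : mxsub f g A = rowsub f (colsub g A) by apply/matrixP => i j; rewrite !mxE.
have := mxrank_unit hu; rewrite e => <-; apply: leq_trans (mxrankS (rowsub_sub f _)) _.
have -> : colsub g A = (rowsub g A^T)^T by apply/matrixP => i j; rewrite !mxE.
by rewrite mxrank_tr -[X in (_ <= X)%N]mxrank_tr; apply: mxrankS; apply: rowsub_sub.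
Qed.

Lemma rank_minor m n (A : 'M[F]_(m, n)) :
  exists (f : 'I_(\rank A) -> 'I_m) (g : 'I_(\rank A) -> 'I_n), \det (mxsub f g A) != 0.
Proof.
set B := rowsub (maxrankfun A) A.
have fB : row_free B := maxrowsub_free A.
have hB : row_full B^T by rewrite /row_full mxrank_tr.
exists (maxrankfun A), (fullrankfun hB).
have := fullrowsub_unit hB; rewrite unitmxE unitfE -det_tr.
suff -> : (rowsub (fullrankfun hB) B^T)^T = mxsub (maxrankfun A) (fullrankfun hB) A by [].
by apply/matrixP => i j; rewrite !mxE.
Qed.

End Minor.

Section Meas.
Context (R : realType) (d0 : measure_display) (T : measurableType d0).

Lemma mpre (f : T -> R) (Y : set R) : measurable_fun setT f -> measurable Y ->
  measurable (f @^-1` Y).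
Proof. by move=> mf mY; rewrite -[f @^-1` Y]setTI; apply: mf. Qed.

Lemma mdet n (F : T -> 'M[R]_n) : (forall i j, measurable_fun setT (fun x => F x i j)) ->
  measurable_fun setT (fun x => \det (F x)).
Proof.
move=> mF; rewrite /determinant.
apply: measurable_sum => s.
apply: (measurable_realfun.measurable_funM (measurable_cst _)).
by apply: measurable_prod => i _; apply: mF.
Qed.

Lemma mrank_ge m n k (F : T -> 'M[R]_(m, n)) :
  (forall i j, measurable_fun setT (fun x => F x i j)) ->
  measurable [set x | (k <= \rank (F x))%N].
Proof.
move=> mF.
have -> : [set x | (k <= \rank (F x))%N] =
  \bigcup_(k' : 'I_m.+1) \bigcup_(f : {ffun 'I_k' -> 'I_m})
     \bigcup_(g : {ffun 'I_k' -> 'I_n})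
     [set x | (k <= k')%N && (\det (mxsub f g (F x)) != 0)].
  apply/seteqP; split => x /=.
    move=> hk; have [f [g hfg]] := @rank_minor _ _ _ (F x).
    have hr : (\rank (F x) < m.+1)%N by rewrite ltnS rank_leq_row.
    exists (Ordinal hr) => //; exists (finfun f) => //; exists (finfun g) => //=.
    by rewrite hk /= mxsub_ffun.
  move=> [k' _ [f _ [g _ /= /andP [hk hd]]]].
  exact: (leq_trans hk (@minor_rank _ _ _ _ _ _ _ hd)).
apply: countable_bigcupT_measurable; first exact: countableP.
move=> k'; apply: countable_bigcupT_measurable; first exact: countableP.
move=> f; apply: countable_bigcupT_measurable; first exact: countableP.
move=> g /=; case: (boolP (k <= k')%N) => hk.
  have -> : [set x | true && (\det (mxsub f g (F x)) != 0)] =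
      (fun x => \det (mxsub f g (F x))) @^-1` (~` [set 0]).
    by apply/seteqP; split => x /= /eqP.
  apply: mpre; last by apply: measurableC; exact: measurable_set1.
  by apply: mdet => i j; rewrite /=; under eq_fun do rewrite mxE; apply: mF.
have -> : [set x | false && (\det (mxsub f g (F x)) != 0)] = set0.
  by apply/seteqP; split => x //=.
exact: measurable0.
Qed.

Lemma mrank_eq m n k (F : T -> 'M[R]_(m, n)) :
  (forall i j, measurable_fun setT (fun x => F x i j)) ->
  measurable [set x | \rank (F x) = k].
Proof.
move=> mF; have -> : [set x | \rank (F x) = k] =
    [set x | (k <= \rank (F x))%N] `\` [set x | (k.+1 <= \rank (F x))%N].
  apply/seteqP; split => x /=.
    by move=> ->; rewrite leqnn ltnn.
  by move=> [h1 h2]; apply/eqP; rewrite eqn_leq h1 andbT leqNgt; apply/negP.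
by apply: measurableD; apply: mrank_ge.
Qed.

Lemma mrank_eq2 m n m' n' (F : T -> 'M[R]_(m, n)) (G : T -> 'M[R]_(m', n')) :
  (forall i j, measurable_fun setT (fun x => F x i j)) ->
  (forall i j, measurable_fun setT (fun x => G x i j)) ->
  measurable [set x | \rank (F x) = \rank (G x)].
Proof.
move=> mF mG.
have -> : [set x | \rank (F x) = \rank (G x)] =
    \bigcup_(k : 'I_m.+1) ([set x | \rank (F x) = k] `&` [set x | \rank (G x) = k]).
  apply/seteqP; split => x /=.
    move=> h; have hr : (\rank (F x) < m.+1)%N by rewrite ltnS rank_leq_row.
    by exists (Ordinal hr).
  by move=> [k _ [-> ->]].
apply: countable_bigcupT_measurable; first exact: countableP.
by move=> k; apply: measurableI; [apply: mrank_eq|apply: mrank_eq].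
Qed.

End Meas.

Section Lin.
Local Set Implicit Arguments. Local Unset Strict Implicit.
Local Close Scope classical_set_scope.
Variable R : rcfType.
Variable n : nat.
Implicit Types x y : 'M[R]_n.
Implicit Types u v w : 'rV[R]_n.

Definition qf x u := (u *m x *m u^T) 0 0.
Definition psdR x := x^T = x /\ forall u, 0 <= qf x u.

Lemma qf_trE x u w : x^T = x -> (w *m x *m u^T) 0 0 = (u *m x *m w^T) 0 0.
Proof.
move=> sx; have -> : w *m x *m u^T = (u *m x *m w^T)^T.
  by rewrite !trmx_mul trmxK sx mulmxA.
by rewrite mxE.
Qed.

Lemma eD m k (A B : 'M[R]_(m,k)) i j : (A + B) i j = A i j + B i j.
Proof. by rewrite mxE. Qed.
Lemma eN m k (A : 'M[R]_(m,k)) i j : (- A) i j = - A i j.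
Proof. by rewrite mxE. Qed.
Lemma eZ m k (A : 'M[R]_(m,k)) (t : R) i j : (t *: A) i j = t * A i j.
Proof. by rewrite mxE. Qed.

Lemma qfD x u w t : x^T = x ->
  qf x (u + t *: w) = qf x u + 2 * t * (u *m x *m w^T) 0 0 + t ^+ 2 * qf x w.
Proof.
move=> sx; rewrite /qf linearD /= linearZ /= !mulmxDl !mulmxDr -!scalemxAl
  -!scalemxAr !eD !eZ (qf_trE u w sx).
by rewrite expr2; ring.
Qed.

Lemma psd_ker x u : psdR x -> qf x u = 0 -> u *m x = 0.
Proof.
move=> [sx px] q0.
have key : forall w, (u *m x *m w^T) 0 0 = 0.
  move=> w; set a := (u *m x *m w^T) 0 0; set b := qf x w.
  have b0 : 0 <= b by apply: px.
  have b1 : b + 1 != 0 by rewrite lt0r_neq0 // ltr_wpDl.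
  have := px (u + (- a / (b + 1)) *: w); rewrite qfD // q0 -/a -/b => h.
  have e : 0 + 2 * (- a / (b + 1)) * a + (- a / (b + 1)) ^+ 2 * b
      = - (a ^+ 2 * (b + 2)) / (b + 1) ^+ 2.
    by field.
  rewrite e in h.
  have : a ^+ 2 * (b + 2) <= 0.
    have hp : 0 < (b + 1) ^+ 2 by rewrite exprn_gt0 // ltr_wpDl.
    rewrite pmulr_lge0 ?invr_gt0 // oppr_ge0 in h; exact: h.
  have bp : 0 < b + 2 by rewrite ltr_wpDl.
  move=> h2; have ha : a ^+ 2 <= 0 by nra.
  by apply/eqP; rewrite -sqrf_eq0 eq_le ha sqr_ge0.
apply/rowP => j; have := key (delta_mx 0 j).
by rewrite trmx_delta -colE !mxE.
Qed.


Definition dot u w := (u *m w^T) 0 0.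

Lemma mulmx_dot m (u w : 'rV[R]_n) (z : 'M[R]_(1, m)) : u *m w^T *m z = dot u w *: z.
Proof. by rewrite [u *m w^T]mx11_scalar mul_scalar_mx. Qed.

Lemma dotC u w : dot u w = dot w u.
Proof. by rewrite /dot -[w *m u^T]trmxK trmx_mul trmxK [RHS]mxE. Qed.

Lemma dotE u : dot u u = \sum_j u 0 j ^+ 2.
Proof. by rewrite /dot mxE; apply: eq_bigr => j _; rewrite mxE expr2. Qed.

Lemma dot_ge0 u : 0 <= dot u u.
Proof. by rewrite dotE sumr_ge0 // => j _; rewrite sqr_ge0. Qed.

Lemma dot_eq0 u : (dot u u == 0) = (u == 0).
Proof.
apply/idP/idP => [|/eqP->]; last by rewrite /dot mul0mx mxE.
rewrite dotE psumr_eq0 => [/allP h|j _]; last exact: sqr_ge0.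
apply/eqP/rowP => j; rewrite mxE; have := h j (mem_index_enum j).
by rewrite sqrf_eq0 => /eqP.
Qed.

Lemma dot_gt0 u : u != 0 -> 0 < dot u u.
Proof. by move=> u0; rewrite lt_def dot_eq0 u0 dot_ge0. Qed.

Lemma psd_add x y : psdR x -> psdR y -> psdR (x + y).
Proof.
move=> [sx px] [sy py]; split; first by rewrite linearD /= sx sy.
by move=> u; rewrite /qf mulmxDr mulmxDl eD addr_ge0 //; [apply: px|apply: py].
Qed.

Lemma psd_conj x (M : 'M[R]_n) : psdR x -> psdR (M *m x *m M^T).
Proof.
move=> [sx px]; split; first by rewrite !trmx_mul trmxK sx mulmxA.
move=> u; have := px (u *m M); rewrite /qf trmx_mul.
by rewrite !mulmxA.
Qed.

Lemma psd_ker_add x y u : psdR x -> psdR y -> u *m (x + y) = 0 -> u *m x = 0.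
Proof.
move=> hx hy h; apply: psd_ker => //.
have : qf (x + y) u = 0 by rewrite /qf h mul0mx mxE.
rewrite /qf mulmxDr mulmxDl eD => /eqP; rewrite paddr_eq0; last 2 first.
- by case: hx => _; apply.
- by case: hy => _; apply.
by case/andP=> /eqP.
Qed.

Lemma sub_sym m (z : 'M[R]_(m, n)) y : y^T = y ->
  (forall u, u *m y = 0 -> z *m u^T = 0) -> (z <= y)%MS.
Proof.
move=> sy h; rewrite submxE.
have h1 : (cokermx y)^T *m y = 0.
  have : (y *m cokermx y)^T = 0 by rewrite mulmx_coker linear0.
  by rewrite trmx_mul sy.
have h2 : (cokermx y)^T *m z^T = 0.
  apply/row_matrixP => i; rewrite row_mul row0.
  have hi : row i (cokermx y)^T *m y = 0 by rewrite -row_mul h1 row0.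
  by rewrite -[row i _]trmxK -trmx_mul h // linear0.
by rewrite -[_ *m _]trmxK trmx_mul h2 linear0.
Qed.

Lemma psd_addE x y : psdR x -> psdR y -> ((x + y)%R :=: (x + y)%MS)%MS.
Proof.
move=> hx hy; have [sx _] := hx; have [sy _] := hy.
have hs : (x + y)^T = x + y by rewrite linearD /= sx sy.
apply/eqmxP/andP; split; first exact: addmx_sub_adds.
rewrite addsmx_sub; apply/andP; split.
  apply: sub_sym => // u /(psd_ker_add hx hy) h.
  by rewrite -[x]sx -trmx_mul h linear0.
apply: sub_sym => // u; rewrite addrC => /(psd_ker_add hy hx) h.
by rewrite -[y]sy -trmx_mul h linear0.
Qed.

Lemma rank_psd_add x y : psdR x -> psdR y -> \rank (x + y)%R = \rank (x + y)%MS.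
Proof. by move=> hx hy; rewrite (psd_addE hx hy). Qed.


Lemma psd_dyad v : psdR (v^T *m v).
Proof.
split; first by rewrite trmx_mul trmxK.
move=> u; rewrite /qf mulmxA -mulmxA mulmx_dot eZ -/(dot v u) dotC -expr2.
exact: sqr_ge0.
Qed.

Lemma decomp x0 a : psdR x0 -> \rank x0 = a.+1 ->
  exists x1 (v : 'rV[R]_n), [/\ psdR x1, \rank x1 = a, v != 0, v *m x1 = 0
     & [/\ (x1 <= x0)%MS, (v <= x0)%MS & (x0 <= x1 + v)%MS]].
Proof.
move=> hx0 rx0; have [sx0 px0] := hx0.
have [i vi] : exists i, row i x0 != 0.
  case: (pickP (fun i => row i x0 != 0)) => [i hi|h]; first by exists i.
  have : x0 = 0 by apply/row_matrixP => i; rewrite row0; apply/eqP; have := h i => /= /negbFE.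
  by move=> x00; move: rx0; rewrite x00 mxrank0.
set v := row i x0.
set s := dot v v.
have s0 : 0 < s by apply: dot_gt0.
pose P : 'M[R]_n := 1%:M - s^-1 *: (v^T *m v).
have sP : P^T = P by rewrite /P linearB /= trmx1 linearZ /= trmx_mul trmxK.
have vP : v *m P = 0.
  by rewrite /P mulmxBr mulmx1 -scalemxAr mulmxA mulmx_dot scalerA mulVf ?lt0r_neq0 // scale1r subrr.
pose x1 := P *m x0 *m P.
have hx1 : psdR x1 by rewrite /x1 -[in X in _ *m X]sP; apply: psd_conj.
have vx1 : v *m x1 = 0 by rewrite /x1 !mulmxA vP !mul0mx.
have vx0 : (v <= x0)%MS by apply: row_sub.
have x1x0 : (x1 <= x0)%MS.
  rewrite /x1 -mulmxA; apply: submx_trans (submxMl _ _) _.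
  rewrite /P mulmxBr mulmx1 addmx_sub // eqmx_opp -scalemxAr mulmxA scalemx_sub //.
  exact: submx_trans (submxMl _ _) vx0.
have x0x1 : (x0 <= x1 + v)%MS.
  have hy := psd_add hx1 (psd_dyad v).
  apply: (submx_trans (B := (x1 + v^T *m v)%R)); last first.
    by apply: addmx_sub_adds => //; apply: submxMl.
  apply: sub_sym; first by case: hy.
  move=> u hu.
  have ux1 : u *m x1 = 0 := psd_ker_add hx1 (psd_dyad v) hu.
  have uvv : u *m (v^T *m v) = 0.
    by move: hu; rewrite mulmxDr ux1 add0r.
  have uv : dot u v = 0.
    move: uvv; rewrite mulmxA mulmx_dot => /eqP; rewrite scaler_eq0 (negbTE vi) orbF.
    by move/eqP.
  have uP : u *m P = u.
    by rewrite /P mulmxBr mulmx1 -scalemxAr mulmxA mulmx_dot uv scale0r scaler0 subr0.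
  have ux0P : u *m x0 *m P = 0 by move: ux1; rewrite /x1 !mulmxA uP.
  have : u *m x0 = 0.
    apply: psd_ker => //; rewrite /qf -{2}uP trmx_mul sP mulmxA ux0P mul0mx mxE //.
  by move=> h; rewrite -[x0]sx0 -trmx_mul h linear0.
exists x1, v; split => //.
apply/eqP; rewrite eqn_leq; apply/andP; split.
  rewrite -ltnS -rx0; apply: rank_ltmx; rewrite ltmxE x1x0 /=.
  apply/negP => /(submx_trans vx0) /submxP [D hD].
  have : s = 0.
    rewrite /s /dot {1}hD -mulmxA.
    have -> : x1 *m v^T = 0.
      by rewrite -[x1](proj1 hx1) -trmx_mul vx1 linear0.
    by rewrite mulmx0 mxE.
  by move=> s00; move: s0; rewrite s00 ltxx.
have := mxrankS x0x1; rewrite rx0 => h.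
have h' : (a.+1 <= \rank x1 + 1)%N.
  exact: leq_trans h (leq_trans (mxrank_adds_leqif x1 v) (leq_add (leqnn _) (rank_leq_row v))).
by rewrite addn1 ltnS in h'.
Qed.


Lemma rank_le_sum x y : psdR x -> psdR y -> (\rank (x + y)%R <= \rank x + \rank y)%N.
Proof. by move=> hx hy; rewrite rank_psd_add //; apply: mxrank_adds_leqif. Qed.

Lemma rank_mono x1 x0 y : psdR x1 -> psdR x0 -> psdR y -> (x1 <= x0)%MS ->
  (\rank (x1 + y)%R <= \rank (x0 + y)%R)%N.
Proof.
move=> h1 h0 hy s10; rewrite !rank_psd_add //; apply: mxrankS.
exact: addsmxS.
Qed.

Lemma rank_step x1 x0 y v : psdR x1 -> psdR x0 -> psdR y -> (x1 <= x0)%MS ->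
  (v <= x0)%MS -> ~~ (v <= (x1 + y)%R)%MS ->
  ((\rank (x1 + y)%R).+1 <= \rank (x0 + y)%R)%N.
Proof.
move=> h1 h0 hy s10 v0 nv.
rewrite !rank_psd_add //; rewrite (psd_addE h1 hy) in nv.
have lt : ((x1 + y)%MS < ((x1 + y) + v)%MS)%MS.
  rewrite ltmxE addsmxSl /=; apply: contra nv; apply: submx_trans.
  exact: addsmxSr.
apply: leq_trans (rank_ltmx lt) _; apply: mxrankS.
rewrite addsmx_sub (addsmxS s10 (submx_refl y)) /=.
exact: submx_trans v0 (addsmxSl _ _).
Qed.

Lemma dyad_eqmx v : v != 0 -> (v^T *m v :=: v)%MS.
Proof.
move=> v0; apply/eqmxP/andP; split; first exact: submxMl.
have e : v = (dot v v)^-1 *: (v *m (v^T *m v)).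
  by rewrite mulmxA mulmx_dot scalerA mulVf ?scale1r // dot_eq0.
by rewrite {1}e; apply: scalemx_sub; apply: submxMl.
Qed.

Lemma mem_rankE N (z : 'rV[R]_n) : psdR N -> (z <= N)%MS = (\rank (N + z^T *m z)%R == \rank N).
Proof.
move=> hN; have [->|z0] := eqVneq z 0.
  by rewrite sub0mx trmx0 mul0mx addr0 eqxx.
rewrite rank_psd_add //; last exact: psd_dyad.
rewrite (adds_eqmx (eqmx_refl N) (dyad_eqmx z0)).
rewrite eq_sym; have := mxrank_leqif_sup (addsmxSl N z) => /eq_leqif ->.
by rewrite addsmx_sub submx_refl.
Qed.

Definition hh w : 'M[R]_n := 1%:M - (2 / dot w w) *: (w^T *m w).

Lemma hh_sym w : (hh w)^T = hh w.
Proof. by rewrite /hh linearB /= trmx1 linearZ /= trmx_mul trmxK. Qed.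

Lemma WW w : (w^T *m w) *m (w^T *m w) = dot w w *: (w^T *m w).
Proof. by rewrite -mulmxA [w *m _]mulmxA mulmx_dot -scalemxAr. Qed.

Lemma hh_orth w : hh w *m (hh w)^T = 1%:M.
Proof.
rewrite hh_sym /hh; have [->|w0] := eqVneq w 0.
  by rewrite trmx0 mul0mx scaler0 subr0 mulmx1.
have s0 : dot w w != 0 by rewrite dot_eq0.
set c := 2 / dot w w; set W := w^T *m w.
rewrite mulmxBr mulmx1 mulmxBl mul1mx -scalemxAr -scalemxAl /W WW scalerA scalerA.
have -> : c * c * dot w w = c + c by rewrite /c; field.
by rewrite scalerDl opprB addrK subrK.
Qed.

Lemma hh_fix w x : x^T = x -> w *m x = 0 -> hh w *m x *m (hh w)^T = x.
Proof.
move=> sx wx; have xw : x *m w^T = 0 by rewrite -sx -trmx_mul wx linear0.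
rewrite hh_sym /hh mulmxBl mul1mx -scalemxAl -mulmxA wx mulmx0 scaler0 subr0.
by rewrite mulmxBr mulmx1 -scalemxAr mulmxA xw mul0mx scaler0 subr0.
Qed.

Lemma hh_map v (c : 'rV[R]_n) : dot v v = dot c c -> v *m hh (v - c) = c.
Proof.
move=> e; have [w0|w0] := eqVneq (v - c) 0.
  by rewrite w0 /hh trmx0 mul0mx scaler0 subr0 mulmx1; apply/eqP; rewrite -subr_eq0 w0.
set w := v - c.
have ww : dot w w = 2 * (dot v v - dot v c).
  rewrite /w /dot linearB /= mulmxBl !mulmxBr !eD !eN !eD !eN.
  rewrite -/(dot v v) -/(dot v c) -/(dot c v) -/(dot c c) (dotC c v) -e.
  ring.
have vw : dot v w = dot v v - dot v c.
  by rewrite /w /dot linearB /= mulmxBr eD eN.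
rewrite /hh mulmxBr mulmx1 -scalemxAr mulmxA mulmx_dot scalerA ww vw.
have [h|nz] := eqVneq (dot v v - dot v c) 0.
  have : dot w w = 0 by rewrite ww h mulr0.
  by move/eqP; rewrite dot_eq0 (negbTE w0).
have -> : 2 / (2 * (dot v v - dot v c)) * (dot v v - dot v c) = 1 by field.
by rewrite scale1r /w opprB addrC subrK.
Qed.


Lemma rank_conj (H A : 'M[R]_n) : H *m H^T = 1%:M -> \rank (H *m A *m H^T) = \rank A.
Proof.
move=> hH; have [uH uHt] := mulmx1_unit hH.
rewrite mxrankMfree; last by rewrite row_free_unit.
by rewrite (eqmxMfull _ (_ : row_full H)) // row_full_unit.
Qed.

Lemma conj_expand (H x1 M : 'M[R]_n) (z : 'rV[R]_n) : H *m H^T = 1%:M -> H *m x1 *m H^T = x1 ->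
  H *m (x1 + M + (z *m H)^T *m (z *m H)) *m H^T = x1 + H *m M *m H^T + z^T *m z.
Proof.
move=> hH hx; rewrite !mulmxDr !mulmxDl hx; congr (_ + _ + _).
rewrite trmx_mul !mulmxA hH mul1mx -!mulmxA hH mulmx1 //.
Qed.

Lemma inv_rank (H x1 M : 'M[R]_n) (z : 'rV[R]_n) : H *m H^T = 1%:M -> H *m x1 *m H^T = x1 ->
  (\rank (x1 + H *m M *m H^T + z^T *m z)%R = \rank (x1 + H *m M *m H^T)%R) <->
  (\rank (x1 + M + (z *m H)^T *m (z *m H))%R = \rank (x1 + M)%R).
Proof.
move=> hH hx; rewrite -(conj_expand M z hH hx) rank_conj //.
have -> : x1 + H *m M *m H^T = H *m (x1 + M) *m H^T.
  by rewrite mulmxDr mulmxDl hx.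
by rewrite rank_conj.
Qed.

Definition mrow (t : R) : 'rV[R]_n := \row_(k < n) t ^+ k.

Lemma root_bound (q : 'cV[R]_n) (ts : seq R) : q != 0 -> uniq ts ->
  (size [seq t <- ts | ((mrow t *m q) 0 0 == 0)%R] < n)%N.
Proof.
move=> q0 uts.
pose E := fun i : nat => if @insub nat (fun i => i < n)%N _ i is Some k then q k 0 else 0.
pose p := \poly_(i < n) E i.
have EK (k : 'I_n) : E k = q k 0 by rewrite /E valK.
have p0 : p != 0.
  apply: contra q0 => /eqP p0; apply/eqP/matrixP => i j.
  have := coef_poly n E i; rewrite ltn_ord EK -/p p0 coef0 => h.
  by rewrite (ord1 j) mxE -h.
have hp : forall t, p.[t] = (mrow t *m q) 0 0.
  move=> t; rewrite horner_poly mxE; apply: eq_bigr => k _.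
  by rewrite EK mxE mulrC.
have := max_poly_roots p0 (_ : all (root p) [seq t <- ts | ((mrow t *m q) 0 0 == 0)%R]) (filter_uniq _ uts).
move=> /(_ _) h; apply: leq_trans (h _) (size_poly _ _).
by apply/allP => t; rewrite mem_filter => /andP [h0 _]; rewrite /root hp.
Qed.

Lemma good_z x1 y : psdR x1 -> psdR y -> (\rank (x1 + y)%R < n)%N ->
  exists z : 'rV[R]_n, [/\ z != 0, z *m x1 = 0 &
    forall c, (c <= (x1 + y)%R)%MS -> dot c z = 0].
Proof.
move=> h1 hy hr; set K := (x1 + y)%R.
have kn0 : kermx K != 0.
  by rewrite -mxrank_eq0 mxrank_ker subn_eq0 -ltnNge.
have [i zi] : exists i, row i (kermx K) != 0.
  case: (pickP (fun i => row i (kermx K) != 0)) => [i hi|h]; first by exists i.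
  have : kermx K = 0.
    by apply/row_matrixP => i; rewrite row0; apply/eqP; have := h i => /= /negbFE.
  by move=> e; move: kn0; rewrite e eqxx.
exists (row i (kermx K)); split => //.
  by apply: (psd_ker_add h1 hy); rewrite -/K -row_mul mulmx_ker row0.
move=> c /submxP [D ->]; rewrite /dot -mulmxA.
have sK : K^T = K by have [? _] := psd_add h1 hy.
have hz : K *m (row i (kermx K))^T = 0.
  by rewrite -{1}sK -trmx_mul -row_mul mulmx_ker row0 linear0.
by rewrite hz mulmx0 mxE.
Qed.

Lemma q_nz (z : 'rV[R]_n) (x1 : 'M[R]_n) : z != 0 -> z *m x1 = 0 -> kermx x1 *m z^T != 0.
Proof.
move=> z0 zx; have : (z <= kermx x1)%MS by rewrite sub_kermx zx.
case/submxP => D hD; apply: contra z0 => /eqP q0.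
by rewrite -dot_eq0 /dot {1}hD -mulmxA q0 mulmx0 mxE.
Qed.

End Lin.

Section Count.
Context (R : realType) (dT : measure_display) (T : measurableType dT) (P : probability T R).

Lemma count_lemma (X : Type) (s : seq X) (A : X -> set T) (M : nat) :
  (forall x, measurable (A x)) ->
  (forall w, (count (fun x => w \in A x) s <= M)%N) ->
  (\sum_(x <- s) P (A x) <= M%:R%:E)%E.
Proof.
move=> mA hc.
have e1 : (\sum_(x <- s) P (A x) = \int[P]_(w in setT) \sum_(x <- s) (\1_(A x) w)%:E)%E.
  rewrite (@ge0_integral_sum _ _ _ P setT measurableT _ (fun x w => (\1_(A x) w)%:E)).
  - by apply: eq_bigr => x _; rewrite integral_indic // setIT.
  - move=> x; apply/measurable_realfun.measurable_EFinP; exact: measurable_realfun.measurable_indic.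
  - by move=> x w _; rewrite lee_fin indicE ler0n.
rewrite e1.
apply: (@le_trans _ _ (\int[P]_(w in setT) (cst (M%:R%:E : \bar R)) w)%E).
  apply: (@ge0_le_integral _ _ _ P setT measurableT) => //.
  - by move=> w _; apply: sume_ge0 => x _; rewrite lee_fin indicE ler0n.
  - apply: emeasurable_sum => x; apply/measurable_realfun.measurable_EFinP.
    exact: measurable_realfun.measurable_indic.
  - move=> w _.
    have hs : forall s' : seq X, (\sum_(x <- s') ((\1_(A x) w : R))%:E =
        ((count (fun x => w \in A x) s')%:R : R)%:E)%E.
      move=> s'; elim: s' => [|x s' IH]; first by rewrite big_nil.
      by rewrite big_cons IH indicE /= natrD EFinD.
    by rewrite hs /= lee_fin ler_nat.
have h1 : (P : measure T R) setT = 1%E by apply: probability_setT.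
by rewrite integral_cst // h1 mule1.
Qed.

End Count.

Lemma mentry (R : realType) (d : nat) (i j : 'I_d) :
  measurable_fun (setT : set (MxMeas R d)) (fun M : MxMeas R d => (M : 'M[R]_d) i j).
Proof.
move=> _ B mB; rewrite setTI; apply: sub_sigma_algebra.
by exists i, j, B.
Qed.

Lemma mY (R : realType) (dT : measure_display) (T : measurableType dT)
  (P : probability T R) (d : nat) (Y : {RV P >-> MxMeas R d}) (i j : 'I_d) :
  measurable_fun setT (fun w => (Y w : 'M[R]_d) i j).
Proof.
apply: (measurableT_comp (f := fun M : MxMeas R d => (M : 'M[R]_d) i j) (g := Y)).
  exact: mentry.
exact: measurable_funPT.
Qed.

Section Main.
Context (R : realType) (dT : measure_display) (T : measurableType dT)
  (P : probability T R) (d b : nat) (Y : {RV P >-> MxMeas R d}).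
Hypothesis HY : forall w, S_rank d b (Y w).
Hypothesis Hinv : forall u : 'M[R]_d, orthogonal_mx u ->
     forall A : set (MxMeas R d), measurable A ->
       P ((fun w => u *m (Y w : 'M[R]_d) *m u^T) @^-1` A) = P (Y @^-1` A).

Let Yf (w : T) : 'M[R]_d := Y w.

Lemma psdY w : psdR (Yf w).
Proof.
have [[sx px] _] := HY w; split => // u; have := px u^T.
by rewrite trmxK.
Qed.

Lemma rankY w : \rank (Yf w) = b.
Proof. by have [_ ->] := HY w. Qed.

Lemma mYf i j : measurable_fun setT (fun w => Yf w i j).
Proof. exact: mY. Qed.

Lemma ment_addl (C : 'M[R]_d) (F : T -> 'M[R]_d) :
  (forall i j, measurable_fun setT (fun w => F w i j)) ->
  forall i j, measurable_fun setT (fun w => (C + F w) i j).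
Proof.
move=> mF i j; under eq_fun do rewrite mxE.
exact: (measurable_realfun.measurable_funD (measurable_cst _) (mF i j)).
Qed.

Lemma ment_addr (C : 'M[R]_d) (F : T -> 'M[R]_d) :
  (forall i j, measurable_fun setT (fun w => F w i j)) ->
  forall i j, measurable_fun setT (fun w => (F w + C) i j).
Proof.
move=> mF i j; under eq_fun do rewrite mxE.
exact: (measurable_realfun.measurable_funD (mF i j) (measurable_cst _)).
Qed.

Definition Ev (x1 : 'M[R]_d) (z : 'rV[R]_d) : set T :=
  [set w | \rank (x1 + Yf w + z^T *m z)%R = \rank (x1 + Yf w)%R].

Lemma mEv x1 z : measurable (Ev x1 z).
Proof.
apply: mrank_eq2.
  by apply: ment_addr; apply: ment_addl; apply: mYf.
by apply: ment_addl; apply: mYf.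
Qed.

Lemma mBad (x : 'M[R]_d) r : measurable [set w | \rank (x + Yf w)%R != r].
Proof.
have -> : [set w | \rank (x + Yf w)%R != r] = ~` [set w | \rank (x + Yf w)%R = r].
  by apply/seteqP; split => w /=; [move=> /eqP|move=> /eqP].
by apply: measurableC; apply: mrank_eq; apply: ment_addl; apply: mYf.
Qed.

Lemma Ev_mem x1 z w : psdR x1 -> Ev x1 z w <-> (z <= (x1 + Yf w)%R)%MS.
Proof.
move=> h1; rewrite (@mem_rankE _ _ _ z (psd_add h1 (psdY w))) /Ev /=.
by split => [->//|/eqP].
Qed.

Lemma Ev_inv x1 z (H : 'M[R]_d) : H *m H^T = 1%:M -> H *m x1 *m H^T = x1 ->
  P (Ev x1 z) = P (Ev x1 (z *m H)).
Proof.
move=> hH hx.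
pose A : set (MxMeas R d) :=
  [set M | \rank (x1 + (M : 'M[R]_d) + z^T *m z)%R = \rank (x1 + (M : 'M[R]_d))%R].
have mA : measurable A.
  apply: mrank_eq2 => i j.
    under eq_fun do rewrite !mxE.
    apply: measurable_realfun.measurable_funD; last exact: measurable_cst.
    exact: (measurable_realfun.measurable_funD (measurable_cst _) (mentry R d i j)).
  under eq_fun do rewrite !mxE.
  exact: (measurable_realfun.measurable_funD (measurable_cst _) (mentry R d i j)).
have := Hinv H hH A mA.
have -> : (fun w => H *m (Y w : 'M[R]_d) *m H^T) @^-1` A = Ev x1 (z *m H).
  apply/seteqP; split => w /=.
    by move/(inv_rank _ z hH hx).
  by move=> h; apply/(inv_rank _ z hH hx).
have -> : Y @^-1` A = Ev x1 z by [].
by move=> ->.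
Qed.


Lemma Ev_scale x1 (c : 'rV[R]_d) (s : R) : psdR x1 -> s != 0 -> Ev x1 (s *: c) = Ev x1 c.
Proof.
move=> h1 s0; apply/seteqP; split => w /(Ev_mem _ _ _ h1) h; apply/(Ev_mem _ _ _ h1).
  by rewrite -(eqmx_scale c s0).
by rewrite (eqmx_scale c s0).
Qed.

Lemma prob_G (A G : set T) : measurable A -> measurable G -> P (~` G) = 0%E ->
  P (A `&` G) = P A.
Proof.
move=> mA mG hG; apply/eqP; rewrite eq_le; apply/andP; split.
  by apply: le_measure => //; rewrite ?inE //; exact: measurableI.
apply: (@le_trans _ _ (P (A `&` G) + P (~` G))%E); last by rewrite hG adde0.
apply: (@le_trans _ _ (P ((A `&` G) `|` ~` G))).
  apply: le_measure; rewrite ?inE //; first by apply: measurableU; [exact: measurableI| exact: measurableC].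
  by move=> w Aw; have [Gw|nGw] := pselect (G w); [left|right].
by apply: measureU2; [exact: measurableI|exact: measurableC].
Qed.


Lemma step1 x1 v (t : R) : psdR x1 -> v != 0 -> v *m x1 = 0 ->
  mrow d t *m kermx x1 != 0 ->
  P (Ev x1 (mrow d t *m kermx x1)) = P (Ev x1 v).
Proof.
move=> h1 v0 vx c0; set c := mrow d t *m kermx x1.
have cx : c *m x1 = 0 by rewrite /c -mulmxA mulmx_ker mulmx0.
have dc : 0 < dot c c by apply: dot_gt0.
have dv : 0 < dot v v by apply: dot_gt0.
set s := Num.sqrt (dot v v / dot c c).
have s2 : s ^+ 2 = dot v v / dot c c by rewrite sqr_sqrtr // divr_ge0 // ltW.
have s0 : s != 0.
  by apply/eqP => s0; move: s2; rewrite s0 expr0n /= => /eqP; rewrite eq_sym mulf_eq0 invr_eq0 !gt_eqF.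
have dsc : dot v v = dot (s *: c) (s *: c).
  rewrite /dot linearZ /= -scalemxAl -scalemxAr !eZ -/(dot c c) mulrA -expr2 s2.
  by rewrite -mulrA mulVf ?mulr1 // gt_eqF.
set H := hh (v - s *: c).
have hH : H *m H^T = 1%:M by apply: hh_orth.
have hx : H *m x1 *m H^T = x1.
  apply: hh_fix; first by case: h1.
  by rewrite mulmxBl vx -scalemxAl cx scaler0 subr0.
rewrite (Ev_inv x1 v H hH hx) /H hh_map //.
by rewrite Ev_scale.
Qed.


Lemma sum_ite (ts : seq R) (p : pred R) (e : \bar R) (r : R) : e = r%:E ->
  (\sum_(t <- ts) (if p t then e else 0%E))%R = ((count p ts)%:R * r)%:E.
Proof.
move=> ->; elim: ts => [|t ts IH]; first by rewrite big_nil mul0r.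
rewrite big_cons IH /=; case: (p t) => /=.
  by rewrite add1n -addn1 natrD mulrDl mul1r addrC EFinD.
by rewrite add0n add0e.
Qed.

Lemma core x1 v : psdR x1 -> v != 0 -> v *m x1 = 0 ->
  P [set w | ~~ (\rank (x1 + Yf w)%R < d)%N] = 0%E -> P (Ev x1 v) = 0%E.
Proof.
move=> h1 v0 vx hG.
set G := [set w | (\rank (x1 + Yf w)%R < d)%N].
have mG : measurable G.
  have -> : G = ~` [set w | (d <= \rank (x1 + Yf w)%R)%N].
    by apply/seteqP; split => w; rewrite /G /= ltnNge; move/negP.
  by apply: measurableC; apply: mrank_ge; apply: ment_addl; apply: mYf.
have hG' : P (~` G) = 0%E.
  by rewrite -hG; congr (P _); apply/seteqP; split => w /= /negP.
set C := kermx x1.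
pose c := fun t : R => mrow d t *m C.
set e := P (Ev x1 v).
have e0 : (0 <= e)%E := measure_ge0 _ _.
have e1 : e = (fine e)%:E.
  rewrite fineK // ge0_fin_numE //; apply: le_lt_trans (ltry 1).
  exact: probability_le1 (mEv x1 v).
set r := fine e.
have r0 : 0 <= r by rewrite -lee_fin -e1.
have qv : C *m v^T != 0 by apply: q_nz.
have key : forall N : nat, ((N - d.-1)%:R * r <= (d.-1)%:R)%R.
  move=> N; pose ts := [seq i%:R | i <- iota 0 N] : seq R.
  have uts : uniq ts.
    rewrite map_inj_uniq ?iota_uniq // => i j /eqP; rewrite eqr_nat => /eqP.
    done.
  have hz : (count (fun t => (c t == 0)%R) ts < d)%N.
    apply: leq_trans (root_bound qv uts); rewrite size_filter ltnS.
    apply: sub_count => t /= /eqP ct.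
    by rewrite mulmxA -/(c t) ct mul0mx mxE.
  have hsum : (\sum_(t <- ts) P (Ev x1 (c t) `&` G) <= (d.-1)%:R%:E)%E.
    apply: count_lemma; first by move=> t; apply: measurableI => //; exact: mEv.
    move=> w; case: (pselect (G w)) => Gw.
      have [z [z0 zx hz']] := good_z h1 (psdY w) Gw.
      have qz : C *m z^T != 0 by apply: q_nz.
      have := root_bound qz uts; rewrite size_filter => hlt.
      rewrite -ltnS (ltn_predK hlt).
      apply: leq_ltn_trans hlt; apply: sub_count => t /=.
      rewrite in_setE => -[/(Ev_mem _ _ _ h1) ht _].
      by rewrite mulmxA -/(c t) -/(dot (c t) z) hz'.
    apply: (@leq_trans 0); last exact: leq0n.
    rewrite leqn0 -(count_pred0 ts); apply/eqP; apply: eq_count => t /=.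
    by apply/negP => /set_mem [_].
  have hlow : (((count (fun t => (c t != 0)%R) ts)%:R * r)%:E
             <= \sum_(t <- ts) P (Ev x1 (c t) `&` G))%E.
    rewrite -(sum_ite ts (fun t => (c t != 0)%R) _ _ e1).
    apply: lee_sum => t _; case: ifP => ct; last exact: measure_ge0.
    rewrite prob_G //; last exact: mEv.
    by rewrite (step1 x1 v t h1 v0 vx ct).
  have := le_trans hlow hsum; rewrite lee_fin.
  apply: le_trans; apply: ler_wpM2r => //; rewrite ler_nat.
  have hc := count_predC (fun t => (c t == 0)%R) ts.
  rewrite size_map size_iota in hc.
  rewrite leq_subLR; rewrite -hc; apply: leq_add; first by rewrite -ltnS (ltn_predK hz).
  by apply: sub_count => t.
have hr : r = 0.
  apply/eqP; rewrite eq_le r0 andbT; apply/negP => /negP; rewrite -ltNge => rp.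
  have hK := @archi_boundP R ((d.-1)%:R / r) (divr_ge0 (ler0n _ _) r0).
  have := key (d.-1 + Num.Def.archi_bound ((d.-1)%:R / r))%N; rewrite addKn.
  rewrite ltr_pdivrMr // in hK.
  by move=> h; have := lt_le_trans hK h; rewrite ltxx.
by rewrite e1 -/r hr.
Qed.


Lemma null_sub (A B : set T) : measurable A -> measurable B -> A `<=` B ->
  P B = 0%E -> P A = 0%E.
Proof.
move=> mA mB AB hB; apply/eqP; rewrite eq_le measure_ge0 andbT -hB.
by apply: le_measure; rewrite ?inE.
Qed.

Lemma ub x0 a w : psdR x0 -> \rank x0 = a ->
  (\rank (x0 + Yf w)%R <= minn (a + b) d)%N.
Proof.
move=> h0 r0; rewrite leq_min rank_leq_row andbT.
by have := rank_le_sum h0 (psdY w); rewrite r0 rankY.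
Qed.

Lemma main a : forall x0, psdR x0 -> \rank x0 = a ->
  P [set w | \rank (x0 + Yf w)%R != minn (a + b) d] = 0%E.
Proof.
elim: a => [|a IH] x0 h0 r0.
  have -> : x0 = 0 by apply/eqP; rewrite -mxrank_eq0 r0.
  have -> : [set w | \rank (0 + Yf w)%R != minn (0 + b) d] = set0.
    apply/seteqP; split => w //=; rewrite add0r rankY add0n.
    have hb : (b <= d)%N by rewrite -(rankY w) rank_leq_row.
    by rewrite (minn_idPl hb) eqxx.
  exact: measure0.
have [x1 [v [h1 rx1 v0 vx [s10 v0' s01]]]] := decomp h0 r0.
have IH1 := IH x1 h1 rx1.
case: (leqP d (a + b)) => hab.
  apply: (null_sub _ _ (mBad _ _) (mBad x1 (minn (a + b) d)) _ IH1) => w /= h; apply/negP => /eqP e.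
  move/negP: h; apply; apply/eqP/anti_leq/andP; split; first exact: ub h0 r0.
  rewrite addSn (minn_idPr (leq_trans hab (leqnSn _))); rewrite (minn_idPr hab) in e.
  by apply: leq_trans (rank_mono h1 h0 (psdY w) s10); rewrite e.
have hab' : (a.+1 + b <= d)%N by rewrite addSn.
have hG : P [set w | ~~ (\rank (x1 + Yf w)%R < d)%N] = 0%E.
  apply: (null_sub _ _ _ (mBad x1 (minn (a + b) d)) _ IH1).
    have -> : [set w | ~~ (\rank (x1 + Yf w)%R < d)%N] = [set w | (d <= \rank (x1 + Yf w)%R)%N].
      by apply/seteqP; split => w /=; rewrite -leqNgt.
    by apply: mrank_ge; apply: ment_addl; apply: mYf.
  move=> w /= h; apply/negP => /eqP e; move: h; rewrite e (minn_idPl (ltnW hab)).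
  by rewrite hab.
have hE := core x1 v h1 v0 vx hG.
have mU : measurable ([set w | \rank (x1 + Yf w)%R != minn (a + b) d] `|` Ev x1 v).
  by apply: measurableU; [exact: mBad|exact: mEv].
apply: (null_sub _ _ (mBad _ _) mU).
  move=> w /= h; case: (pselect (Ev x1 v w)) => nE; [by right|left].
  apply/negP => /eqP e1.
  move/negP: h; apply; apply/eqP/anti_leq/andP; split; first exact: ub h0 r0.
  rewrite (minn_idPl hab').
  have nv : ~~ (v <= (x1 + Yf w)%R)%MS by apply/negP => /(Ev_mem _ _ _ h1).
  have := rank_step h1 h0 (psdY w) s10 v0' nv.
  by rewrite e1 (minn_idPl (ltnW hab)) addSn.
apply/eqP; rewrite eq_le measure_ge0 andbT.
apply: le_trans (measureU2 _ _ _) _; [exact: mBad|exact: mEv|].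
rewrite [X in (X + _ <= _)%E](_ : _ = 0%E); last exact: IH1.
rewrite [X in (_ + X <= _)%E](_ : _ = 0%E); last exact: hE.
by rewrite adde0.
Qed.

End Main.

Lemma psd_of {R : realType} {d} {x : 'M[R]_d} : psd x -> psdR x.
Proof. by move=> [sx px]; split => // u; have := px u^T; rewrite trmxK. Qed.

Lemma psd_to {R : realType} {d} {x : 'M[R]_d} : psdR x -> psd x.
Proof. by move=> [sx px]; split => // v; have := px v^T; rewrite /qf trmxK. Qed.

Theorem lemma5p2 (R : realType) (dT : measure_display) (T : measurableType dT)
  (P : probability T R) (d b : nat) (Y : {RV P >-> MxMeas R d})
  (HY : forall w, S_rank d b (Y w))
  (Hinv : forall u : 'M[R]_d, orthogonal_mx u ->
     forall A : set (MxMeas R d), measurable A ->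
       P ((fun w => u *m (Y w : 'M[R]_d) *m u^T) @^-1` A) = P (Y @^-1` A)) :
  (forall (a : nat) (x0 : 'M[R]_d), S_rank d a x0 ->
     ((a + b <= d)%N -> {ae P, forall w, S_rank d (a + b) (x0 + Y w)}) /\
     ((d <= a + b)%N -> {ae P, forall w, S_rank d d (x0 + Y w)})) /\
  (forall (a c : nat) (x0 : 'M[R]_d), S_rank d c x0 -> (a + b < d)%N ->
     {ae P, forall w, S_rank d (a + b) (x0 + Y w)} -> c = a).
Proof.
have M := @main R dT T P d b Y HY Hinv.
have psdYw : forall w, psdR (Y w : 'M[R]_d) by move=> w; have [h _] := HY w; exact: psd_of.
split.
  move=> a x0 [hp hr]; have h0 := psd_of hp.
  have Mx := M a x0 h0 hr.
  have sum_psd : forall w, psd (x0 + (Y w : 'M[R]_d)) by move=> w; apply: psd_to; apply: psd_add.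
  split => hab.
    exists [set w | \rank (x0 + (Y w : 'M[R]_d))%R != minn (a + b) d]; split.
    - exact: (@mBad R dT T P d Y).
    - exact: Mx.
    - move=> w /= nS; apply/negP => /eqP e; apply: nS; split => //.
      by rewrite e (minn_idPl hab).
  exists [set w | \rank (x0 + (Y w : 'M[R]_d))%R != minn (a + b) d]; split.
  - exact: (@mBad R dT T P d Y).
  - exact: Mx.
  - move=> w /= nS; apply/negP => /eqP e; apply: nS; split => //.
    by rewrite e (minn_idPr hab).
move=> a c x0 [hp hr] hab [N [mN PN sN]].
have h0 := psd_of hp.
have Mx := M c x0 h0 hr.
set N1 := [set w | \rank (x0 + (Y w : 'M[R]_d))%R != minn (c + b) d].
have mN1 : measurable N1 by exact: (@mBad R dT T P d Y).
have [w hw] : exists w, ~ (N1 `|` N) w.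
  apply: contrapT => hne.
  have : (P setT <= P (N1 `|` N))%E.
    apply: le_measure; rewrite ?inE //; first exact: measurableU.
    by move=> w _; apply: contrapT => h; apply: hne; exists w.
  rewrite probability_setT.
  have : (P (N1 `|` N) <= 0)%E.
    apply: le_trans (measureU2 _ mN1 mN) _.
    rewrite [X in (X + _ <= _)%E](_ : _ = 0%E); last exact: Mx.
    rewrite [X in (_ + X <= _)%E](_ : _ = 0%E); last exact: PN.
    by rewrite adde0.
  move=> h1 h2; have := le_trans h2 h1; by rewrite lee_fin ler10.
have hS : S_rank d (a + b) (x0 + Y w).
  apply: contrapT => nS; apply: hw; right; exact: sN.
have e1 : \rank (x0 + (Y w : 'M[R]_d))%R = minn (c + b) d.
  apply/eqP; apply: contrapT => nE; apply: hw; left; exact/negP.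
have [_ e2] := hS.
rewrite e2 in e1.
have hcb : (c + b <= d)%N.
  case: (leqP (c + b) d) => // hlt; move: e1; rewrite (minn_idPr (ltnW hlt)) => e.
  by move: hab; rewrite e ltnn.
move: e1; rewrite (minn_idPl hcb) => /eqP; rewrite eqn_add2r => /eqP.
done.
Qed.
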